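(* Let $q\ge4$ be even, let $\alpha,\beta\in\mathbb{F}_{q^2}$ with $\alpha\neq0$, $\beta\notin\mathbb{F}_q$ and $\alpha^{q+1}/(\beta^q+\beta)^2$ of absolute trace $0$, let $R=(0,\delta,1)$ and $U_\infty=(1,0,0)$. If $\ell$ is a line of $\mathrm{PG}(2,q^2)$ through $U_\infty$, then $\ell$ meets $\mathrm{pedal}(R)$ in at most two points.
   Context: Points of $\mathrm{PG}(2,q^2)$ have homogeneous coordinates $(x,y,z)$. $\delta\in\mathbb{F}_{q^2}\setminus\mathbb{F}_q$ satisfies $\delta^q=1+\delta$ and $\delta^2=v+\delta$ with $v\in\mathbb{F}_q$, $v\ne1$, of absolute trace $1$. $\mathcal U_{\alpha\beta}=\{(x,\alpha x^2+\beta x^{q+1}+r,1): x\in\mathbb{F}_{q^2}, r\in\mathbb{F}_q\}\cup\{(0,1,0)\}$, which under the hypotheses is a unital (a set of $q^3+1$ points meeting every line in $1$ or $q+1$ points), and $R\notin\mathcal U_{\alpha\beta}$. For a point $P$ not on the unital, $\mathrm{pedal}(P)$ is the set of points of contact of the $q+1$ tangent lines (lines meeting the unital in exactly one point) through $P$. *)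

(* Defs.v *)
From HB Require Import structures.
From mathcomp Require Import all_boot all_order all_algebra all_field.
Set Implicit Arguments. Unset Strict Implicit. Unset Printing Implicit Defensive.
Import Order.TTheory GRing.Theory.
Local Open Scope ring_scope.

Section PG.
Variable F : finFieldType.

Definition vec3 := (F * F * F)%type.

(* canonical representative of the projective point spanned by a nonzero
   triple: the last nonzero coordinate is scaled to 1 *)
Definition normalize (P : vec3) : vec3 :=
  let: (x, y, z) := P in
  if z != 0 then (x / z, y / z, 1)
  else if y != 0 then (x / y, 1, 0)
  else if x != 0 then (1, 0, 0) else (0, 0, 0).

(* points (and, dually, lines) of PG(2,F), given by canonical representatives *)
Definition is_point (P : vec3) : bool :=
  (P != (0, 0, 0)) && (normalize P == P).

Definition incident (L P : vec3) : bool :=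
  L.1.1 * P.1.1 + L.1.2 * P.1.2 + L.2 * P.2 == 0.

Variable q : nat.

Definition inFq (x : F) : bool := x ^+ q == x.

Definition abs_trace (h : nat) (x : F) : F := \sum_(i < h) x ^+ (2 ^ i).

Definition unital (alpha beta : F) : {set vec3} :=
  [set P : vec3 | [exists x : F, exists r : F,
      inFq r && (P == (x, alpha * x ^+ 2 + beta * x ^+ q.+1 + r, 1))]
    || (P == (0, 1, 0))].

Definition tangent (alpha beta : F) (L : vec3) : bool :=
  is_point L && (#|[set P in unital alpha beta | incident L P]| == 1%N).

Definition pedal (alpha beta : F) (R : vec3) : {set vec3} :=
  [set P in unital alpha beta |
     [exists L : vec3, [&& tangent alpha beta L, incident L R & incident L P]]].

End PG.

(* Main.v *)
Require Import Defs.
From HB Require Import structures.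
From mathcomp Require Import all_boot all_order all_algebra all_field.
From mathcomp Require Import ring.
Import Order.TTheory GRing.Theory.
Local Open Scope ring_scope.

Set Implicit Arguments. Unset Strict Implicit.
Section Char2.
Variable F : fieldType.
Hypothesis two0 : (2 : F) = 0.

Lemma addC2 (x : F) : x + x = 0.
Proof. by rewrite -mulr2n -mulr_natr two0 mulr0. Qed.

Lemma oppC2 (x : F) : - x = x.
Proof. by apply/eqP; rewrite eq_sym -addr_eq0 addC2. Qed.

Lemma sqrD2 (x y : F) : (x + y) ^+ 2 = x ^+ 2 + y ^+ 2.
Proof.
have -> : (x + y) ^+ 2 = x ^+ 2 + y ^+ 2 + 2 * (x * y) by ring.
by rewrite two0 mul0r addr0.
Qed.

Lemma frD2 n (x y : F) : (x + y) ^+ (2 ^ n) = x ^+ (2 ^ n) + y ^+ (2 ^ n).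
Proof.
elim: n => [|n IH]; first by rewrite !expr1.
by rewrite expnS mulnC !exprM IH sqrD2.
Qed.

Lemma sq_inj2 (x y : F) : x ^+ 2 = y ^+ 2 -> x = y.
Proof.
move=> e; have : (x + y) ^+ 2 = 0 by rewrite sqrD2 e addC2.
move/eqP; rewrite expf_eq0 /= => /eqP/eqP; rewrite addr_eq0 oppC2 => /eqP //.
Qed.

Lemma tele2 n (z : F) :
  \sum_(i < n) (z ^+ 2 + z) ^+ (2 ^ i) = z ^+ (2 ^ n) + z.
Proof.
elim: n => [|n IH]; first by rewrite big_ord0 expr1 addC2.
rewrite big_ord_recr /= IH frD2 -exprM -expnS.
set a := z ^+ (2 ^ n); set b := z ^+ (2 ^ n.+1).
have -> : a + z + (b + a) = b + z + (a + a) by ring.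
by rewrite addC2 addr0.
Qed.

End Char2.

Lemma eq2 (F : fieldType) (two0 : (2 : F) = 0) (a b X : F) : a = b + 2 * X -> a = b.
Proof. by rewrite two0 mul0r addr0. Qed.

Lemma sum0_eq2 (F : fieldType) (two0 : (2 : F) = 0) (a b : F) : a + b = 0 -> a = b.
Proof. by move/eqP; rewrite addr_eq0 (oppC2 two0) => /eqP. Qed.

Unset Implicit Arguments. Set Strict Implicit.

Section Main.
Variables (h : nat) (F : finFieldType).
Hypothesis hF : #|F| = (2 ^ h * 2 ^ h)%N.
Local Notation q := (2 ^ h)%N.

Lemma two0F : (2 : F) = 0.
Proof.
apply: (@pcharf0 F 2); apply: (@card_finPcharP F 2 (h + h)) => //.
by rewrite hF expnD.
Qed.

Lemma fK (x : F) : (x ^+ q) ^+ q = x.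
Proof. by rewrite -exprM -hF expf_card. Qed.

Lemma fD (x y : F) : (x + y) ^+ q = x ^+ q + y ^+ q.
Proof. exact (frD2 two0F h x y). Qed.

Lemma fV (x : F) : (x^-1) ^+ q = (x ^+ q)^-1.
Proof. by rewrite exprVn. Qed.

Variables alpha beta : F.
Hypothesis halpha : alpha != 0.
Hypothesis hbeta : ~~ inFq q beta.
Local Notation b := (beta ^+ q + beta).

Lemma bq : b ^+ q = b.
Proof. by rewrite fD fK addrC. Qed.

Lemma bn0 : b != 0.
Proof.
apply: contra hbeta => /eqP e; rewrite /inFq.
by rewrite -[X in _ == X](oppC2 two0F) -addr_eq0 e.
Qed.

Hypothesis htr : abs_trace h (alpha ^+ q.+1 / b ^+ 2) = 0.

Lemma anis (w : F) : w != 0 ->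
  alpha * w ^+ 2 + alpha ^+ q * (w ^+ q) ^+ 2 + b * (w * w ^+ q) != 0.
Proof.
move=> wn0; apply/negP => /eqP Q0.
have wqn0 : w ^+ q != 0 by rewrite expf_neq0.
have bn := bn0.
set z := alpha * w / (b * w ^+ q).
have zq : z ^+ q = alpha ^+ q * w ^+ q / (b * w).
  by rewrite /z !exprMn fV exprMn bq fK.
have Q1 : alpha * w ^+ 2 + alpha ^+ q * (w ^+ q) ^+ 2 = b * (w * w ^+ q).
  by rewrite -(oppC2 two0F (b * _)); apply/eqP; rewrite -addr_eq0 Q0.
have zs : z + z ^+ q = 1.
  rewrite zq /z.
  have -> : alpha * w / (b * w ^+ q) + alpha ^+ q * w ^+ q / (b * w)
     = (alpha * w ^+ 2 + alpha ^+ q * (w ^+ q) ^+ 2) / (b * (w * w ^+ q)).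
    by field; rewrite bn wn0 wqn0.
  by rewrite Q1 divff // mulf_neq0 // mulf_neq0.
have e1 : z ^+ 2 + z = alpha ^+ q.+1 / b ^+ 2.
  rewrite -{2}(mulr1 z) -zs.
  have -> : z ^+ 2 + z * (z + z ^+ q) = 2 * z ^+ 2 + z * z ^+ q by ring.
  rewrite two0F mul0r add0r zq /z exprSr.
  by field; rewrite bn wn0 wqn0.
move: htr; rewrite -e1 /abs_trace tele2 ?two0F // addrC zs.
by move/eqP; rewrite oner_eq0.
Qed.

Lemma unitalA (x y : F) :
  ((x, y, 1) \in unital q alpha beta) = inFq q (y + alpha * x ^+ 2 + beta * x ^+ q.+1).
Proof.
rewrite inE; apply/idP/idP.
  case/orP => [/existsP [x' /existsP [r /andP [hr /eqP E]]] | /eqP E].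
    case: E => ex ey; rewrite ey ex.
    suff -> : alpha * x' ^+ 2 + beta * x' ^+ q.+1 + r + alpha * x' ^+ 2 + beta * x' ^+ q.+1 = r by [].
    apply: (@eq2 _ two0F _ _ (alpha * x' ^+ 2 + beta * x' ^+ q.+1)); ring.
  by case: E => _ _ /eqP; rewrite oner_eq0.
move=> H; apply/orP; left; apply/existsP; exists x; apply/existsP.
exists (y + alpha * x ^+ 2 + beta * x ^+ q.+1); rewrite H /=; apply/eqP.
congr (_, _, _); apply: (@eq2 _ two0F _ _ (- (alpha * x ^+ 2 + beta * x ^+ q.+1))); ring.
Qed.

Variable delta : F.
Hypothesis hdq : delta ^+ q = 1 + delta.

Lemma deltan0 : delta != 0.
Proof.
apply/eqP => d0; move: hdq; rewrite d0 expr0n expn_eq0 /= addr0 => /eqP.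
by rewrite eq_sym oner_eq0.
Qed.

Lemma Kq_gen (w : F) :
  (alpha * w ^+ 2 + alpha ^+ q * (w ^+ q) ^+ 2 + b * (w * w ^+ q)) ^+ q
  = alpha * w ^+ 2 + alpha ^+ q * (w ^+ q) ^+ 2 + b * (w * w ^+ q).
Proof.
rewrite !fD !exprMn bq !fK; ring.
Qed.

Lemma key (x0 y0 a b' c' : F) : (x0, y0, 1) \in unital q alpha beta -> b' != 0 ->
  incident (a, b', c') (x0, y0, 1) -> a != b' * b * x0 ^+ q ->
  exists x', x' != x0 /\ (x', (a * x' + c') / b', 1) \in unital q alpha beta /\
     incident (a, b', c') (x', (a * x' + c') / b', 1).
Proof.
move=> Pin bn0' inc ne.
rewrite unitalA /inFq in Pin.
have y0E : y0 = (a * x0 + c') / b'.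
  move: inc; rewrite /incident /= mulr1 => /eqP inc.
  apply: (mulfI bn0'); rewrite [RHS]mulrC divfK //.
  apply: (sum0_eq2 two0F); rewrite -inc; ring.
set m := a / b'.
set e := m + b * x0 ^+ q.
have en0 : e != 0.
  apply: contra ne => /eqP e0; apply/eqP.
  have : m = b * x0 ^+ q by apply: (sum0_eq2 two0F).
  by rewrite /m => /(congr1 ( *%R b')); rewrite mulrC divfK // mulrA.
set w := delta / e.
have wn0 : w != 0 by rewrite mulf_neq0 // ?invr_eq0 // deltan0.
set K := alpha * w ^+ 2 + alpha ^+ q * (w ^+ q) ^+ 2 + b * (w * w ^+ q).
have Kn0 : K != 0 by exact: anis.
set u := w / K.
have un0 : u != 0 by rewrite mulf_neq0 // invr_eq0.
exists (x0 + u); split.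
  by rewrite -subr_eq0 addrC addKr.
split; last first.
  rewrite /incident /= mulr1; apply/eqP.
  apply: (@eq2 _ two0F _ _ (a * (x0 + u) + c')); field; exact bn0'.
rewrite unitalA /inFq.
set r0 := y0 + alpha * x0 ^+ 2 + beta * x0 ^+ q.+1 in Pin.
set D := m * u + alpha * u ^+ 2 + beta * (x0 ^+ q * u + x0 * u ^+ q + u ^+ q * u).
have rE : (a * (x0 + u) + c') / b' + alpha * (x0 + u) ^+ 2 + beta * (x0 + u) ^+ q.+1
          = r0 + D.
  rewrite [(x0 + u) ^+ q.+1]exprSr fD /r0 /D /m y0E [x0 ^+ q.+1]exprSr.
  apply: (@eq2 _ two0F _ _ (alpha * x0 * u)); field; exact bn0'.
rewrite rE fD (eqP Pin); apply/eqP; congr (_ + _).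
have Kq : K ^+ q = K.
  exact: Kq_gen.
have hu : u * K = w by rewrite /u divfK.
have huq : u ^+ q * K = w ^+ q by rewrite -Kq -exprMn hu.
have he : e * w = delta by rewrite /w mulrC divfK.
have heq : e ^+ q * w ^+ q = 1 + delta by rewrite -exprMn he hdq.
have eqE : e ^+ q = m ^+ q + b * x0.
  by rewrite /e fD [(b * _) ^+ q]exprMn bq fK.
have S0 : alpha * u ^+ 2 + alpha ^+ q * (u ^+ q) ^+ 2 + b * (u * u ^+ q)
          + e * u + e ^+ q * u ^+ q = 0.
  have H2 : K ^+ 2 * (alpha * u ^+ 2 + alpha ^+ q * (u ^+ q) ^+ 2 + b * (u * u ^+ q)
          + e * u + e ^+ q * u ^+ q) = 2 * (K * (1 + delta)).
    transitivity (alpha * (u * K) ^+ 2 + alpha ^+ q * (u ^+ q * K) ^+ 2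
       + b * ((u * K) * (u ^+ q * K)) + K * (e * (u * K)) + K * (e ^+ q * (u ^+ q * K))).
      ring.
    rewrite hu huq he heq -/K; ring.
  move: H2; rewrite two0F mul0r => /eqP; rewrite mulf_eq0 expf_eq0 (negbTE Kn0) andbF /=.
  by move/eqP.
have eE : e = m + b * x0 ^+ q by [].
clearbody u e m.
apply: (sum0_eq2 two0F).
rewrite /D !(fD, exprMn, fK) -S0 eqE eE; ring.
Qed.


Lemma tangent_at (x0 y0 : F) (L' : vec3 F) : (x0, y0, 1) \in unital q alpha beta ->
  tangent q alpha beta L' -> incident L' (0, delta, 1) -> incident L' (x0, y0, 1) ->
  b * x0 ^+ q.+1 = y0 + delta.
Proof.
case: L' => [[a b'] c'] Pin /andP [_ /cards1P [P0 hA]] iR iP.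
have inA : forall P, P \in unital q alpha beta -> incident (a, b', c') P -> P = P0.
  by move=> P h1 h2; apply/set1P; rewrite -hA inE h1 h2.
move: iR; rewrite /incident /= mulr0 add0r mulr1 => /eqP iR.
have cE : c' = b' * delta by apply: (sum0_eq2 two0F); rewrite addrC.
have Pi := inA _ Pin iP.
case: (eqVneq b' 0) => [b0 | bn0'].
  have u1 : (0, 1, 0) \in unital q alpha beta by rewrite inE eqxx orbT.
  have u2 : (0, 0, 1) \in unital q alpha beta.
    by rewrite unitalA /inFq !expr0n /= !mulr0 !addr0 expr0n expn_eq0.
  have h1 := inA _ u1; have h2 := inA _ u2.
  have i1 : incident (a, b', c') (0, 1, 0).
    by rewrite /incident /= cE b0 !mul0r !mulr0 !addr0.
  have i2 : incident (a, b', c') (0, 0, 1).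
    by rewrite /incident /= cE b0 !mul0r !mulr0 !addr0.
  have := h1 i1; rewrite -(h2 i2) => -[] /eqP.
  by rewrite oner_eq0.
case: (eqVneq a (b' * b * x0 ^+ q)) => [aE | ane].
  apply: (sum0_eq2 two0F); apply: (mulfI bn0'); rewrite mulr0.
  move: iP; rewrite /incident /= => /eqP <-.
  rewrite aE cE exprSr; ring.
have [x' [xne [x'in x'inc]]] := key _ _ _ _ _ Pin bn0' iP ane.
have := inA _ x'in x'inc; rewrite -Pi => -[] /eqP.
by rewrite (negbTE xne).
Qed.

Lemma unital_cases (P : vec3 F) : P \in unital q alpha beta ->
  P = (0, 1, 0) \/ exists x y, P = (x, y, 1).
Proof.
rewrite inE => /orP [/existsP [x /existsP [r /andP [_ /eqP ->]]] | /eqP ->].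
  by right; exists x, (alpha * x ^+ 2 + beta * x ^+ q.+1 + r).
by left.
Qed.

Lemma quad_card (g C : F) :
  (#|[set t : F | ((t + g) * (t + g ^+ q) == C)%R]| <= 2)%N.
Proof.
set T := [set t : F | (t + g) * (t + g ^+ q) == C].
pose p : {poly F} := ('X + g%:P) * ('X + (g ^+ q)%:P) - C%:P.
have n1 : ('X + g%:P) != 0 by rewrite -size_poly_eq0 size_XaddC.
have n2 : ('X + (g ^+ q)%:P) != 0 by rewrite -size_poly_eq0 size_XaddC.
have sp : size p = 3%N.
  rewrite /p size_polyDl size_mul // !size_XaddC //.
  by rewrite size_polyN (leq_ltn_trans (size_polyC_leq1 _)) // size_mul // !size_XaddC.
have pn0 : p != 0 by rewrite -size_poly_eq0 sp.
have := @max_poly_roots _ p (enum T) pn0.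
rewrite enum_uniq sp -cardE; apply => //.
apply/allP => t; rewrite mem_enum inE => /eqP E.
by rewrite /root /p !hornerE E subrr.
Qed.


Lemma main_sec (L : vec3 F) : is_point L -> incident L (1, 0, 0) ->
  (#|[set P in pedal q alpha beta (0%R : F, delta, 1%R : F) | incident L P]| <= 2)%N.
Proof.
case: L => [[l1 l2] l3] Lpt.
rewrite /incident /= mulr1 !mulr0 !addr0 => /eqP l10; subst l1.
set S := [set P in _ | _].
have memS : forall P, P \in S -> [/\ P \in unital q alpha beta,
    (exists L', [&& tangent q alpha beta L', incident L' (0, delta, 1) & incident L' P])
    & incident (0, l2, l3) P].
  move=> P; rewrite !inE => /andP [/andP [Pu /existsP [L' HL]] Pi].
  by split => //; exists L'.
case: (eqVneq l2 0) => [l20 | l2n0].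
  apply: (@leq_trans #|[set (0, 1, 0) : vec3 F]|); last by rewrite cards1.
  apply: subset_leq_card; apply/subsetP => P /memS [Pu _ Pi].
  case: (unital_cases _ Pu) => [-> | [x [y PE]]]; first by rewrite inE.
  move: Pi Lpt; rewrite PE /incident /= l20 !mul0r mulr1 !add0r => /eqP ->.
  by rewrite /is_point eqxx.
set c := l3 / l2.
set k := (c + delta) / b.
set g := beta * k + delta.
have bn := bn0.
have PS : forall P, P \in S ->
    exists x, [/\ P = (x, c, 1), (x, c, 1) \in unital q alpha beta & x ^+ q.+1 = k].
  move=> P /memS [Pu [L' /and3P [tL iR iP]] Pi].
  case: (unital_cases _ Pu) => [PE | [x [y PE]]].
    move: Pi; rewrite PE /incident /= mul0r mulr1 mulr0 !addr0 add0r => /eqP l2z.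
    by move: l2n0; rewrite l2z eqxx.
  have yc : y = c.
    move: Pi; rewrite PE /incident /= mul0r add0r mulr1 => /eqP Pi.
    rewrite /c; apply: (mulfI l2n0); rewrite [RHS]mulrC divfK //.
    exact: (sum0_eq2 two0F Pi).
  rewrite PE yc in Pu iP *.
  exists x; split => //.
  by rewrite /k -(tangent_at _ _ _ Pu tL iR iP) mulrC mulKf.
have inj : {in S &, injective (fun P : vec3 F => alpha * P.1.1 ^+ 2 + g)}.
  move=> P1 P2 /PS [x1 [-> _ _]] /PS [x2 [-> _ _]] /= /addIr /(mulfI halpha).
  by move/(sq_inj2 two0F) ->.
rewrite -(card_in_imset inj).
apply: leq_trans (quad_card g (alpha ^+ q.+1 * k ^+ 2)).
apply: subset_leq_card; apply/subsetP => t /imsetP [P /PS [x [-> xu xk]] ->].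
rewrite inE /=.
have kq : k ^+ q = k by rewrite -xk exprSr exprMn fK mulrC.
have cd : c + delta = b * k by rewrite /k mulrC divfK.
have tq : (alpha * x ^+ 2 + g) ^+ q = alpha * x ^+ 2 + g.
  rewrite unitalA /inFq xk in xu.
  have -> : alpha * x ^+ 2 + g = (c + alpha * x ^+ 2 + beta * k) + b * k.
    rewrite -cd /g; apply: (@eq2 _ two0F _ _ (- c)); ring.
  by rewrite fD (eqP xu) exprMn bq kq.
have E1 : alpha * x ^+ 2 + g + g = alpha * x ^+ 2.
  by apply: (@eq2 _ two0F _ _ g); ring.
have E2 : alpha * x ^+ 2 + g + g ^+ q = (alpha * x ^+ 2) ^+ q.
  by rewrite -[in RHS]E1 [in RHS]fD tq.
rewrite E1 E2.
rewrite exprMn exprAC -xk [x ^+ q.+1]exprSr; apply/eqP.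
rewrite [alpha ^+ q.+1]exprSr; ring.
Qed.

End Main.


Theorem lemma3p3 (h : nat) (F : finFieldType)
  (hh : (2 <= h)%N) (hF : #|F| = (2 ^ h * 2 ^ h)%N)
  (delta v : F)
  (hdelta : ~~ inFq (2 ^ h) delta)
  (hdq : delta ^+ (2 ^ h) = 1 + delta)
  (hd2 : delta ^+ 2 = v + delta)
  (hv : inFq (2 ^ h) v) (hv1 : v != 1) (hvtr : abs_trace h v = 1)
  (alpha beta : F)
  (halpha : alpha != 0) (hbeta : ~~ inFq (2 ^ h) beta)
  (htr : abs_trace h (alpha ^+ (2 ^ h).+1 / (beta ^+ (2 ^ h) + beta) ^+ 2) = 0)
  (L : vec3 F) :
  is_point L -> incident L (1 : F, 0 : F, 0 : F) ->
  (#|[set P in pedal (2 ^ h) alpha beta (0%R : F, delta, 1%R : F) | incident L P]| <= 2)%N.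
Proof.
exact: (@main_sec h F hF alpha beta halpha hbeta htr delta hdq L).
Qed.
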